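(* Let $A$ be a real matrix with $d_\ell$ columns, $H:=A^\top A$, and suppose $\mu I\preceq H\preceq LI$ for some $0<\mu\le L$. Let $\lambda_s\ge 0$, and for $t=1,\dots,T$ let $b_t$ be vectors (of the row dimension of $A$) and $c_t\in\mathbb{R}^{d_\ell}$. Define $f_t(u)=\frac12\|Au-b_t\|_2^2$, the unanchored minimizer $u_t^\circ:=\arg\min_{u\in\mathbb{R}^{d_\ell}} f_t(u)$ and the anchored minimizer \[ u_t^\star:=\arg\min_{u\in\mathbb{R}^{d_\ell}}\Big\{f_t(u)+\frac{\lambda_s}{2}\|u-c_t\|_2^2\Big\}. \] Then for every $t=2,\dots,T$, \[ \|u_t^\star-u_{t-1}^\star\|_2\le\kappa(\lambda_s)\|u_t^\circ-u_{t-1}^\circ\|_2+\alpha(\lambda_s)\|c_t-c_{t-1}\|_2, \] where \[ \kappa(\lambda_s):=\big\|(H+\lambda_s I)^{-1}H\big\|_{\mathrm{op}}\le\frac{L}{\mu+\lambda_s},\qquad \alpha(\lambda_s):=\big\|\lambda_s(H+\lambda_s I)^{-1}\big\|_{\mathrm{op}}\le\frac{\lambda_s}{\mu+\lambda_s}. \] Consequently, with $V_T^\circ:=\sum_{t=2}^T\|u_t^\circ-u_{t-1}^\circ\|_2$, $V_T^c:=\sum_{t=2}^T\|c_t-c_{t-1}\|_2$ and $V_T^\star:=\sum_{t=2}^T\|u_t^\star-u_{t-1}^\star\|_2$, \[ V_T^\star\le\kappa(\lambda_s)V_T^\circ+\alpha(\lambda_s)V_T^c . \]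
   Context: $\|\cdot\|_2$ is the Euclidean norm, $\|\cdot\|_{\mathrm{op}}$ the operator (spectral) norm, and $\preceq$ the Loewner order on symmetric matrices. *)

(* Defs.v *)
From HB Require Import structures.
From mathcomp Require Import all_boot all_order all_algebra.
From mathcomp Require Import boolp classical_sets reals.
Set Implicit Arguments. Unset Strict Implicit. Unset Printing Implicit Defensive.
Import Order.TTheory GRing.Theory Num.Theory.
Local Open Scope ring_scope.
Local Open Scope classical_set_scope.

Definition enorm (R : realType) (n : nat) (x : 'cV[R]_n) : R :=
  Num.sqrt (\sum_(i < n) (x i 0) ^+ 2).

Definition opnorm (R : realType) (m n : nat) (M : 'M[R]_(m, n)) : R :=
  sup [set enorm (M *m x) | x in [set x : 'cV[R]_n | enorm x <= 1]].

Definition loewner_le (R : realType) (n : nat) (A B : 'M[R]_n) : Prop :=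
  forall x : 'cV[R]_n, 0 <= ((x^T *m (B - A) *m x) 0 0).

Definition is_argmin (R : realType) (n : nat) (f : 'cV[R]_n -> R) (u : 'cV[R]_n) : Prop :=
  forall v, f u <= f v.

(* Main.v *)
Require Import Defs.
From HB Require Import structures.
From mathcomp Require Import all_boot all_order all_algebra.
From mathcomp Require Import boolp classical_sets reals.
From mathcomp Require Import ring lra.
Set Implicit Arguments. Unset Strict Implicit.
Import Order.TTheory GRing.Theory Num.Theory.
Local Open Scope ring_scope.
Local Open Scope classical_set_scope.

Section Aux.
Variable R : realType.

Definition dot (n : nat) (u v : 'cV[R]_n) : R := (u^T *m v) 0 0.

Lemma dotE n (u v : 'cV[R]_n) : dot u v = \sum_i u i 0 * v i 0.
Proof. by rewrite /dot mxE; apply: eq_bigr => i _; rewrite mxE. Qed.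

Lemma dotC n (u v : 'cV[R]_n) : dot u v = dot v u.
Proof. by rewrite !dotE; apply: eq_bigr => i _; rewrite mulrC. Qed.

Lemma dotDr n (u v w : 'cV[R]_n) : dot u (v + w) = dot u v + dot u w.
Proof. by rewrite /dot mulmxDr mxE. Qed.

Lemma dotZr n a (u v : 'cV[R]_n) : dot u (a *: v) = a * dot u v.
Proof. by rewrite /dot -scalemxAr mxE. Qed.

Lemma dotNr n (u v : 'cV[R]_n) : dot u (- v) = - dot u v.
Proof. by rewrite /dot mulmxN mxE. Qed.

Lemma dotDl n (u v w : 'cV[R]_n) : dot (v + w) u = dot v u + dot w u.
Proof. by rewrite dotC dotDr !(dotC u). Qed.

Lemma dotZl n a (u v : 'cV[R]_n) : dot (a *: v) u = a * dot v u.
Proof. by rewrite dotC dotZr dotC. Qed.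

Lemma dotNl n (u v : 'cV[R]_n) : dot (- v) u = - dot v u.
Proof. by rewrite dotC dotNr dotC. Qed.

Lemma dotBr n (u v w : 'cV[R]_n) : dot u (v - w) = dot u v - dot u w.
Proof. by rewrite dotDr dotNr. Qed.

Lemma dotBl n (u v w : 'cV[R]_n) : dot (v - w) u = dot v u - dot w u.
Proof. by rewrite dotDl dotNl. Qed.

Lemma dot_mul m n (A : 'M[R]_(m, n)) u v : dot (A *m u) v = dot u (A^T *m v).
Proof. by rewrite /dot trmx_mul mulmxA. Qed.

Lemma dotvv_ge0 n (u : 'cV[R]_n) : 0 <= dot u u.
Proof. by rewrite dotE; apply: sumr_ge0 => i _; rewrite -expr2 sqr_ge0. Qed.

Lemma dotvv_eq0 n (u : 'cV[R]_n) : dot u u = 0 -> u = 0.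
Proof.
rewrite dotE => /eqP; rewrite psumr_eq0; last by move=> i _; rewrite -expr2 sqr_ge0.
move=> /allP H; apply/matrixP => i j; rewrite ord1 mxE.
by have := H i (mem_index_enum _); rewrite implyTb mulf_eq0 orbb => /eqP.
Qed.

Lemma enormE n (u : 'cV[R]_n) : enorm u = Num.sqrt (dot u u).
Proof. by rewrite /enorm dotE; congr Num.sqrt; apply: eq_bigr => i _; rewrite expr2. Qed.

Lemma enorm_ge0 n (u : 'cV[R]_n) : 0 <= enorm u.
Proof. exact: sqrtr_ge0. Qed.

Lemma enorm2 n (u : 'cV[R]_n) : enorm u ^+ 2 = dot u u.
Proof. by rewrite enormE sqr_sqrtr // dotvv_ge0. Qed.

Lemma le_sq (a b : R) : 0 <= b -> a ^+ 2 <= b ^+ 2 -> a <= b.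
Proof.
move=> b0 h; have [a0|a0] := leP 0 a; last by apply: le_trans (ltW a0) b0.
by rewrite -(ler_pXn2r (n:=2)) // nnegrE.
Qed.

Lemma dot0r n (u : 'cV[R]_n) : dot u 0 = 0.
Proof. by rewrite /dot mulmx0 mxE. Qed.

Lemma cauchy n (u v : 'cV[R]_n) : dot u v <= enorm u * enorm v.
Proof.
have [v0|vn0] := eqVneq (dot v v) 0.
  by rewrite (dotvv_eq0 v0) dot0r mulr_ge0 ?enorm_ge0.
apply: le_sq; first by rewrite mulr_ge0 ?enorm_ge0.
rewrite exprMn !enorm2.
have vp : 0 < dot v v by rewrite lt_neqAle eq_sym vn0 dotvv_ge0.
have k : dot u u * dot v v - dot u v ^+ 2 =
   dot (u - (dot u v / dot v v) *: v) (u - (dot u v / dot v v) *: v) * dot v v.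
  rewrite !(dotBl, dotBr, dotZl, dotZr) (dotC v u).
  by field; rewrite gt_eqF.
have : 0 <= dot u u * dot v v - dot u v ^+ 2.
  by rewrite k; apply: mulr_ge0; [exact: dotvv_ge0 | exact: ltW].
by rewrite subr_ge0.
Qed.

Lemma enormD n (u v : 'cV[R]_n) : enorm (u + v) <= enorm u + enorm v.
Proof.
apply: le_sq; first by rewrite addr_ge0 ?enorm_ge0.
rewrite enorm2 sqrrD !enorm2 !(dotDl, dotDr) (dotC v u).
have := cauchy u v; rewrite mulr2n; lra.
Qed.

Lemma enormZ n a (u : 'cV[R]_n) : enorm (a *: u) = `|a| * enorm u.
Proof.
by rewrite !enormE dotZl dotZr mulrA -expr2 sqrtrM ?sqr_ge0 // sqrtr_sqr.
Qed.

Lemma enorm0 n (u : 'cV[R]_n) : enorm u = 0 -> u = 0.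
Proof.
move=> h; apply: dotvv_eq0; by rewrite -enorm2 h expr0n.
Qed.


Lemma enorm_0 n : enorm (0 : 'cV[R]_n) = 0.
Proof. by rewrite enormE dot0r sqrtr0. Qed.

Lemma in_img m n (M : 'M[R]_(m,n)) x : enorm x <= 1 ->
  [set enorm (M *m x) | x in [set x : 'cV[R]_n | enorm x <= 1]] (enorm (M *m x)).
Proof. move=> h. exists x. exact: h. reflexivity. Qed.

Lemma opnorm_le m n (M : 'M[R]_(m, n)) k : 0 <= k ->
  (forall x, enorm (M *m x) <= k * enorm x) ->
  opnorm M <= k /\ forall x, enorm (M *m x) <= opnorm M * enorm x.
Proof.
move=> k0 hk.
have ub : ubound [set enorm (M *m x) | x in [set x : 'cV[R]_n | enorm x <= 1]] k.
  move=> _ [x hx <-]; apply: le_trans (hk x) _.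
  by rewrite -[leRHS]mulr1 ler_wpM2l.
split.
  apply: ge_sup => //; exists (enorm (M *m 0)), 0 => //.
  by rewrite /= enorm_0 ler01.
move=> x; have [e0|ep] := eqVneq (enorm x) 0.
  by rewrite (enorm0 e0) mulmx0 !enorm_0 mulr0.
have ep' : 0 < enorm x by rewrite lt_neqAle eq_sym ep enorm_ge0.
have := @ub_le_sup _ [set enorm (M *m x) | x in [set x : 'cV[R]_n | enorm x <= 1]] (ex_intro _ k ub) (enorm (M *m ((enorm x)^-1 *: x))).
move=> h.
have h' : enorm (M *m ((enorm x)^-1 *: x)) <= opnorm M.
  apply: h; apply: in_img.
  by rewrite enormZ ger0_norm ?invr_ge0 ?enorm_ge0 ?mulVf.
move: h'; rewrite -scalemxAr (enormZ _ (M *m x)) ger0_norm ?invr_ge0 ?enorm_ge0 // => h'.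
by rewrite -ler_pdivrMr // mulrC.
Qed.


Lemma quad0 (g q : R) : 0 <= q -> (forall s, 0 <= s * g + s ^+ 2 * q) -> g = 0.
Proof.
move=> q0 h; have := h (- g / (q + 1)).
have q1 : q + 1 != 0 by rewrite gt_eqF // ltr_wpDl.
have -> : - g / (q + 1) * g + (- g / (q + 1)) ^+ 2 * q = - (g ^+ 2) / (q + 1) ^+ 2.
  by field.
have qp : 0 < (q + 1) ^+ 2 by rewrite exprn_gt0 // ltr_wpDl.
rewrite pmulr_lge0 ?invr_gt0 //.
by rewrite oppr_ge0 => hg; apply/eqP; rewrite -sqrf_eq0 eq_le hg sqr_ge0.
Qed.

Lemma div_bound (a K e ex : R) : 0 < a -> 0 <= K -> 0 <= e -> 0 <= ex ->
  a * e ^+ 2 <= K * e * ex -> e <= K / a * ex.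
Proof.
move=> a0 K0 e0 x0 h.
have [->|en] := eqVneq e 0; first by rewrite !mulr_ge0 ?invr_ge0 // ltW.
have ep : 0 < e by rewrite lt_neqAle eq_sym en.
have h2 : a * e <= K * ex.
  rewrite -(ler_pM2r ep); move: h; rewrite expr2 mulrA [K * e * ex]mulrAC //.
rewrite mulrAC ler_pdivlMr //; by rewrite [e * a]mulrC.
Qed.

Lemma quadform n (B : 'M[R]_n) x : (x^T *m B *m x) 0 0 = dot x (B *m x).
Proof. by rewrite /dot mulmxA. Qed.

Lemma argmin_grad m n (A : 'M[R]_(m, n)) (b : 'cV[R]_m) (c u : 'cV[R]_n) (lam : R) :
  0 <= lam ->
  is_argmin (fun u => 2^-1 * enorm (A *m u - b) ^+ 2
                         + lam / 2 * enorm (u - c) ^+ 2) u ->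
  A^T *m (A *m u - b) + lam *: (u - c) = 0.
Proof.
move=> l0 hmin.
set G := A^T *m (A *m u - b) + lam *: (u - c).
apply: dotvv_eq0.
pose q := (dot (A *m G) (A *m G) + lam * dot G G) / 2.
apply: (@quad0 _ q).
  by rewrite /q divr_ge0 // addr_ge0 ?mulr_ge0 ?dotvv_ge0.
move=> s; have := hmin (u + s *: G).
rewrite !enorm2 mulmxDr -scalemxAr (addrAC _ (s *: _)) (addrAC _ (s *: _)).
have eG : dot G G = dot (A *m G) (A *m u - b) + lam * dot G (u - c).
  have eG' : forall v, dot v G = dot (A *m v) (A *m u - b) + lam * dot v (u - c).
    by move=> v; rewrite /G [LHS]dotDr dotZr dot_mul.
  exact: eG'.
rewrite /q; clearbody G; move: eG.
move: (A *m u - b) (u - c) (A *m G) => r w aG eG.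
rewrite !(dotDl, dotDr, dotZl, dotZr) (dotC r aG) (dotC w G) eG.
move: (dot r r) (dot w w) (dot aG r) (dot G w) (dot aG aG) => x1 x2 x3 x4 x5.
lra.
Qed.

Lemma mxE_B p k (X Y : 'M[R]_(p, k)) i j : (X - Y) i j = X i j - Y i j.
Proof. by rewrite !mxE. Qed.

Lemma mxE_Z p k a (X : 'M[R]_(p, k)) i j : (a *: X) i j = a * X i j.
Proof. by rewrite !mxE. Qed.

Lemma zid (V : zmodType) (a b c d : V) : (a + b) - (c + d) = (a - c) + (b - d).
Proof. by rewrite opprD addrACA. Qed.

Lemma rep m n (A : 'M[R]_(m, n)) (lam : R) (M : 'M[R]_n) (b : 'cV[R]_m) (c uo us : 'cV[R]_n) :
  M = A^T *m A + lam%:M -> M \in unitmx ->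
  A^T *m (A *m uo - b) = 0 ->
  A^T *m (A *m us - b) + lam *: (us - c) = 0 ->
  us = invmx M *m (A^T *m A) *m uo + (lam *: invmx M) *m c.
Proof.
move=> eM Mu ho hs.
apply: (can_inj (mulKmx Mu)).
rewrite mulmxDr -!mulmxA -scalemxAl -scalemxAr !(mulKVmx Mu) !mulmxA.
move: ho; rewrite mulmxBr mulmxA => /eqP; rewrite subr_eq0 => /eqP ->.
apply/eqP; rewrite -subr_eq0 -[X in _ == X]hs; apply/eqP.
by rewrite eM mulmxDl mul_scalar_mx zid mulmxBr mulmxA scalerBr.
Qed.

Lemma bound_gen m n (A : 'M[R]_(m, n)) (mu L lam : R) (M : 'M[R]_n) :
  0 < mu -> 0 <= lam -> M = A^T *m A + lam%:M ->
  (forall x, mu * dot x x <= dot (A *m x) (A *m x)) ->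
  (forall x, dot x (M *m x) = dot (A *m x) (A *m x) + lam * dot x x) ->
  forall y K ex, 0 <= K -> 0 <= ex -> dot y (M *m y) <= K * enorm y * ex ->
  enorm y <= K / (mu + lam) * ex.
Proof.
move=> mu0 l0 eM hmu hM y K ex K0 x0 h.
apply: div_bound => //; first by rewrite ltr_wpDr.
  exact: enorm_ge0.
apply: le_trans h; rewrite hM enorm2 mulrDl lerD2r; exact: hmu.
Qed.

End Aux.

Theorem propositionC3 (R : realType) (m d : nat) (A : 'M[R]_(m, d))
  (mu L lam : R) (T : nat) (b : nat -> 'cV[R]_m) (c : nat -> 'cV[R]_d)
  (uo us : nat -> 'cV[R]_d) :
  0 < mu -> mu <= L -> 0 <= lam ->
  loewner_le (mu%:M) (A^T *m A) -> loewner_le (A^T *m A) (L%:M) ->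
  (forall t, (1 <= t <= T)%N ->
     is_argmin (fun u => 2^-1 * enorm (A *m u - b t) ^+ 2) (uo t)) ->
  (forall t, (1 <= t <= T)%N ->
     is_argmin (fun u => 2^-1 * enorm (A *m u - b t) ^+ 2
                         + lam / 2 * enorm (u - c t) ^+ 2) (us t)) ->
  let H := A^T *m A in
  let kappa := opnorm (invmx (H + lam%:M) *m H) in
  let alpha := opnorm (lam *: invmx (H + lam%:M)) in
  [/\ kappa <= L / (mu + lam),
      alpha <= lam / (mu + lam),
      (forall t, (2 <= t <= T)%N ->
         enorm (us t - us t.-1) <=
           kappa * enorm (uo t - uo t.-1) + alpha * enorm (c t - c t.-1))
    & \sum_(2 <= t < T.+1) enorm (us t - us t.-1) <=
        kappa * (\sum_(2 <= t < T.+1) enorm (uo t - uo t.-1))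
        + alpha * (\sum_(2 <= t < T.+1) enorm (c t - c t.-1))].

Proof.
move=> mu0 muL l0 hlo hhi huo hus H kappa alpha.
have L0 : 0 < L by apply: lt_le_trans muL.
have hmu : forall x, mu * dot x x <= dot (A *m x) (A *m x).
  move=> x; have := hlo x.
  rewrite mulmxBr mulmxBl mxE_B mul_mx_scalar -scalemxAl mxE_Z quadform.
  by rewrite dot_mul mulmxA subr_ge0.
have hL : forall x, dot (A *m x) (A *m x) <= L * dot x x.
  move=> x; have := hhi x.
  rewrite mulmxBr mulmxBl mxE_B mul_mx_scalar -scalemxAl mxE_Z quadform.
  by rewrite dot_mul mulmxA subr_ge0.
pose M := A^T *m A + lam%:M.
have eM : M = A^T *m A + lam%:M by [].
have hM : forall x, dot x (M *m x) = dot (A *m x) (A *m x) + lam * dot x x.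
  by move=> x; rewrite /M mulmxDl mul_scalar_mx dotDr dotZr dot_mul mulmxA.
have Mu : M \in unitmx.
  rewrite unitmxE unitfE; apply/negP => /det0P [v vn0 vM].
  have Mt : M^T = M by rewrite /M linearD /= trmx_mul trmxK tr_scalar_mx.
  have Mv : M *m v^T = 0 by rewrite -{1}Mt -trmx_mul vM trmx0.
  have h1 := hmu v^T; have h2 := dotvv_ge0 v^T; have h3 := dotvv_ge0 (A *m v^T).
  have := hM v^T; rewrite Mv dot0r => h4.
  have e0 : dot v^T v^T = 0.
    move: h1 h2 h3 h4 l0 mu0; move: (dot v^T v^T) (dot (A *m v^T) (A *m v^T)) => dd aa.
    move=> h1 h2 h3 h4 l0 mu0; nra.
  by move: vn0; rewrite -(trmxK v) (dotvv_eq0 e0) trmx0 eqxx.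
have cs2 : forall y x, dot (A *m y) (A *m x) <= L * enorm y * enorm x.
  move=> y x; apply: le_trans (cauchy _ _) _.
  apply: le_sq; first by rewrite !mulr_ge0 ?enorm_ge0 // ltW.
  rewrite !exprMn !enorm2.
  have -> : L ^+ 2 * dot y y * dot x x = (L * dot y y) * (L * dot x x).
    by rewrite expr2 -!mulrA; congr (_ * _); rewrite mulrCA.
  by apply: ler_pM; rewrite ?dotvv_ge0.
have kb : forall x, enorm (invmx M *m H *m x) <= L / (mu + lam) * enorm x.
  move=> x; apply: (@bound_gen _ _ _ A mu L lam M) => //; first exact: ltW.
    exact: enorm_ge0.
  rewrite -mulmxA (mulKVmx Mu) /H -(mulmxA A^T A x) -[in X in X <= _]dot_mul.
  exact: cs2.
have ab : forall x, enorm ((lam *: invmx M) *m x) <= lam / (mu + lam) * enorm x.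
  move=> x; apply: (@bound_gen _ _ _ A mu L lam M) => //.
    exact: enorm_ge0.
  rewrite -scalemxAl -scalemxAr (mulKVmx Mu) dotZr -mulrA ler_wpM2l //.
  exact: cauchy.
have [kap1 kap2] := opnorm_le (ltW (divr_gt0 L0 (ltr_wpDr l0 mu0))) kb.
have a0 : 0 <= lam / (mu + lam) by rewrite divr_ge0 // ltW // ltr_wpDr.
have [alp1 alp2] := opnorm_le a0 ab.
have step : forall t, (2 <= t <= T)%N ->
    enorm (us t - us t.-1) <=
    kappa * enorm (uo t - uo t.-1) + alpha * enorm (c t - c t.-1).
  move=> t /andP [t2 tT].
  have ht : (1 <= t <= T)%N by rewrite tT andbT; apply: leq_trans t2.
  have ht1 : (1 <= t.-1 <= T)%N.
    apply/andP; split; first by rewrite -ltnS prednK // (leq_trans _ t2).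
    by apply: leq_trans (leq_pred t) tT.
  have repr : forall k, (1 <= k <= T)%N ->
      us k = invmx M *m H *m uo k + (lam *: invmx M) *m c k.
    move=> k hk; apply: (rep eM Mu).
      have hk0 : is_argmin (fun u => 2^-1 * enorm (A *m u - b k) ^+ 2
                         + (0 : R) / 2 * enorm (u - 0) ^+ 2) (uo k).
        by move=> v; rewrite !mul0r !addr0; apply: (huo k hk).
      move: (argmin_grad (le_refl 0) hk0); rewrite scale0r addr0 => h0; exact: h0.
    exact: argmin_grad l0 (hus k hk).
  rewrite (repr t ht) (repr t.-1 ht1) zid -!mulmxBr.
  apply: le_trans (enormD _ _) _.
  by apply: lerD; [exact: kap2 | exact: alp2].
split => //.
rewrite !mulr_sumr -big_split /=.
apply: ler_sum_nat => t /andP [t2 tT]; apply: step.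
by rewrite t2 -ltnS.
Qed.
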